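(* Suppose that $\rho\ge2$, that $\rho=t-\Theta(1)$, and that $a=t+O(1)$ is a positive integer. Then $x_t(\rho)+a\,y_t(\rho)=\log(d_a)+O(1)$. (That is, for fixed constants bounding $t-\rho$ above and below by positive constants and bounding $|a-t|$, the difference $x_t(\rho)+ay_t(\rho)-\log d_a$ is bounded uniformly.)
   Context: $d_i=2^{\binom i2}i!$. For positive integer $t$ and real $1<\rho<t$, $x_t(\rho),y_t(\rho)$ are the unique reals $x,y$ with $\sum_{i=1}^t e^{x+iy}d_i^{-1}=1$ and $\sum_{i=1}^t ie^{x+iy}d_i^{-1}=\rho$. Logarithms are natural. *)

(* Defs.v *)
From Stdlib Require Import Reals Lra Lia Factorial.
Open Scope R_scope.

(* d_i = 2^(binom i 2) * i!   (binom i 2 = i(i-1)/2, exact integer division) *)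
Definition d (i : nat) : R :=
  INR (2 ^ (Nat.div (i * (i - 1)) 2) * Factorial.fact i)%nat.

Fixpoint sum1 (t : nat) (f : nat -> R) : R :=
  match t with
  | O => 0
  | S n => sum1 n f + f (S n)
  end.

(* (x, y) = (x_t(rho), y_t(rho)): the (unique) reals with
   sum_{i=1}^t e^{x+iy}/d_i = 1 and sum_{i=1}^t i e^{x+iy}/d_i = rho. *)
Definition is_xy (t : nat) (rho x y : R) : Prop :=
  sum1 t (fun i => exp (x + INR i * y) / d i) = 1 /\
  sum1 t (fun i => INR i * exp (x + INR i * y) / d i) = rho.

(* Main.v *)
Require Import Defs.
From Stdlib Require Import Reals Lra Lia Factorial.
Open Scope R_scope.

Fixpoint sum0 (n : nat) (f : nat -> R) : R :=
  match n with O => 0 | S n => sum0 n f + f n end.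

Lemma sum0_ext n f g : (forall k, (k < n)%nat -> f k = g k) -> sum0 n f = sum0 n g.
Proof. induction n; simpl; intros H; [reflexivity|]. rewrite IHn by (intros; apply H; lia). rewrite H by lia; reflexivity. Qed.

Lemma sum0_le n f g : (forall k, (k < n)%nat -> f k <= g k) -> sum0 n f <= sum0 n g.
Proof. induction n; simpl; intros H; [lra|]. assert (sum0 n f <= sum0 n g) by (apply IHn; intros; apply H; lia). assert (f n <= g n) by (apply H; lia). lra. Qed.

Lemma sum0_plus n f g : sum0 n (fun k => f k + g k) = sum0 n f + sum0 n g.
Proof. induction n; simpl; [lra|]. rewrite IHn; lra. Qed.

Lemma sum0_scal n c f : sum0 n (fun k => c * f k) = c * sum0 n f.
Proof. induction n; simpl; [lra|]. rewrite IHn; lra. Qed.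

Lemma sum0_minus n f g : sum0 n (fun k => f k - g k) = sum0 n f - sum0 n g.
Proof. induction n; simpl; [lra|]. rewrite IHn; lra. Qed.

Lemma sum0_nonneg n f : (forall k, (k < n)%nat -> 0 <= f k) -> 0 <= sum0 n f.
Proof. intros H. apply Rle_trans with (sum0 n (fun _ => 0)).
 - clear H; induction n; simpl; lra.
 - apply sum0_le; auto. Qed.

Lemma sum0_shift n h : sum0 (S n) h = h 0%nat + sum0 n (fun k => h (S k)).
Proof. induction n; simpl in *; [lra|]. rewrite IHn. lra. Qed.

Lemma sum0_mono m n f : (m <= n)%nat -> (forall k, 0 <= f k) -> sum0 m f <= sum0 n f.
Proof. intros Hmn H. induction Hmn; [lra|]. simpl. specialize (H m0). lra. Qed.

Lemma sum0_term k n f : (k < n)%nat -> (forall k, 0 <= f k) -> f k <= sum0 n f.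
Proof. intros Hk H. apply Rle_trans with (sum0 (S k) f).
 - simpl. assert (0 <= sum0 k f) by (apply sum0_nonneg; auto). lra.
 - apply sum0_mono; auto. Qed.

Lemma sum1_rev t f : sum1 t f = sum0 t (fun k => f (t - k)%nat).
Proof. induction t.
 - reflexivity.
 - rewrite sum0_shift. simpl. rewrite IHt. replace (S t - 0)%nat with (S t) by lia. lra. Qed.

Lemma geom n : sum0 n (fun k => (/2)^k) + 2 * (/2)^n = 2.
Proof. induction n; simpl; [lra|]. lra. Qed.

Lemma kgeom n : sum0 n (fun k => INR k * (/2)^k) + INR (n+1) * 2 * (/2)^n = 2.
Proof. induction n; [simpl; lra|]. cbn [sum0]. replace (S n + 1)%nat with (S (S n)) by lia.
 rewrite !S_INR. rewrite plus_INR in IHn. simpl INR in IHn. simpl pow.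
 set (a := (/2)^n) in *. set (b := sum0 n _) in *. replace (b + INR n * a + (INR n + 1 + 1) * 2 * (/2 * a)) with (b + (INR n + 1) * 2 * a) by field. exact IHn. Qed.

Lemma tail m n Q : (m <= n)%nat -> (forall k, 0 <= Q k) ->
  INR m * (sum0 n Q - sum0 m Q) <= sum0 n (fun k => INR k * Q k).
Proof. intros Hmn H. induction Hmn.
 - replace (sum0 m Q - sum0 m Q) with 0 by ring. rewrite Rmult_0_r.
   apply sum0_nonneg; intros; apply Rmult_le_pos; [apply pos_INR|auto].
 - simpl. assert (INR m <= INR m0) by (apply le_INR; auto). specialize (H m0).
   assert (INR m * Q m0 <= INR m0 * Q m0) by (apply Rmult_le_compat_r; auto). nra. Qed.

Lemma invar Q lam N : 2 <= lam -> (forall k, 0 <= Q k) ->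
  (forall k, (S k <= N)%nat -> lam * Q k <= Q (S k)) ->
  forall j, (j <= N)%nat -> sum0 j Q <= 2 * Q j / lam.
Proof. intros Hl HQ Hr. induction j; intros Hj; simpl.
 - specialize (HQ 0%nat). apply Rmult_le_pos; [lra| apply Rlt_le, Rinv_0_lt_compat; lra].
 - assert (IH := IHj ltac:(lia)). assert (H1 := Hr j Hj).
   assert (sum0 j Q + Q j <= (2/lam + 1) * Q j) by (unfold Rdiv in *; lra).
   assert (Q j <= Q (S j) / lam).
   { apply Rmult_le_reg_l with lam; [lra|]. field_simplify; lra. }
   assert (0 <= Q j) by auto.
   assert ((2/lam + 1) <= 2) by (apply Rle_trans with (2/2+1); [ apply Rplus_le_compat_r; apply Rmult_le_compat_l; [lra| apply Rinv_le_contravar; lra] | lra]).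
   apply Rle_trans with ((2/lam + 1) * Q j); [lra|].
   apply Rle_trans with (2 * Q j); [nra|].
   unfold Rdiv in *. nra. Qed.

Lemma s_upper n s : (forall k, 0 < s k) -> (forall k, (S k < n)%nat -> s (S k) <= s k / 2) ->
  forall k, (k < n)%nat -> s k <= s 0%nat * (/2)^k.
Proof. intros Hs Hsu. induction k; intros Hk; simpl; [lra|].
 specialize (IHk ltac:(lia)). specialize (Hsu k Hk). lra. Qed.

Lemma s_lower n s : (forall k, 0 < s k) -> (forall k, (S k < n)%nat -> s k / 4 <= s (S k)) ->
  forall k, (k < n)%nat -> s 0%nat <= s k * 4^k.
Proof. intros Hs Hsl. induction k; intros Hk; simpl; [lra|].
 specialize (IHk ltac:(lia)). specialize (Hsl k Hk). assert (0 < 4^k) by (apply pow_lt; lra). nra. Qed.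

Lemma s_le0 n s : (forall k, 0 < s k) -> (forall k, (S k < n)%nat -> s (S k) <= s k / 2) ->
  forall k, (k < n)%nat -> s k <= s 0%nat.
Proof. intros Hs Hsu. induction k; intros Hk; [lra|].
 specialize (IHk ltac:(lia)). specialize (Hsu k Hk). specialize (Hs k). lra. Qed.

Lemma Q_pow n Q s : (forall k, 0 < s k) -> (forall k, (S k < n)%nat -> Q (S k) = Q k * s k) ->
  (forall k, (S k < n)%nat -> s (S k) <= s k / 2) -> (forall k, 0 < Q k) ->
  forall k, (k < n)%nat -> Q k <= Q 0%nat * (s 0%nat)^k.
Proof. intros Hs Hrec Hsu HQ. induction k; intros Hk; simpl; [lra|].
 specialize (IHk ltac:(lia)). rewrite Hrec by lia.
 assert (s k <= s 0%nat) by (apply (s_le0 n); auto; lia).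
 specialize (Hs k). specialize (HQ k). nra. Qed.

Lemma partL n Q s : (forall k, 0 < s k) -> (forall k, (S k < n)%nat -> Q (S k) = Q k * s k) ->
  (forall k, (S k < n)%nat -> s (S k) <= s k / 2) -> (forall k, 0 < Q k) ->
  sum0 n Q = 1 -> s 0%nat <= /2 ->
  sum0 n (fun k => INR k * Q k) <= 4 * s 0%nat.
Proof. intros Hs Hrec Hsu HQ Hsum Hs0.
 assert (HQ0 : forall k, (k < n)%nat -> Q 0%nat <= 1).
 { intros k Hk. rewrite <- Hsum. apply sum0_term; [lia|]. intros; apply Rlt_le; auto. }
 apply Rle_trans with (sum0 n (fun k => 2 * s 0%nat * (INR k * (/2)^k))).
 - apply sum0_le. intros k Hk. destruct k as [|k].
   + simpl. lra.
   + assert (H1 := Q_pow n Q s Hs Hrec Hsu HQ (S k) Hk).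
     assert (H2 : s 0%nat ^ k <= (/2)^k) by (apply pow_incr; split; [apply Rlt_le, Hs| lra]).
     assert (0 < s 0%nat) by auto. assert (0 <= Q 0%nat <= 1) by (split; [apply Rlt_le; auto| apply (HQ0 (S k) Hk)]).
     assert (0 <= s 0%nat ^ k) by (apply pow_le; lra).
     assert (Q (S k) <= 2 * s 0%nat * (/2)^(S k)).
     { simpl in H1 |- *.
       assert (Q 0%nat * (s 0%nat * s 0%nat ^ k) <= s 0%nat * s 0%nat ^ k) by (assert (0 <= s 0%nat * s 0%nat ^ k) by nra; nra).
       assert (s 0%nat * s 0%nat ^ k <= s 0%nat * (/2)^k) by (apply Rmult_le_compat_l; lra).
       lra. }
     assert (0 <= INR (S k)) by apply pos_INR. nra.
 - rewrite sum0_scal. pose proof (kgeom n).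
   assert (0 <= INR (n+1) * 2 * (/2)^n) by (assert (0 < (/2)^n) by (apply pow_lt; lra); assert (0 <= INR (n+1)) by apply pos_INR; nra).
   assert (0 < s 0%nat) by auto. nra. Qed.

Lemma partU n Q s c2 m : (1 <= m)%nat -> 2 * c2 < INR m -> (1 <= n)%nat ->
  (forall k, 0 < s k) -> (forall k, (S k < n)%nat -> Q (S k) = Q k * s k) ->
  (forall k, (S k < n)%nat -> s k / 4 <= s (S k)) -> (forall k, 0 < Q k) ->
  sum0 n Q = 1 -> sum0 n (fun k => INR k * Q k) <= c2 ->
  sum0 n (fun k => INR k * Q k) <= INR n - 2 ->
  s 0%nat <= 4 * INR m * 4^m.
Proof. intros Hm Hc2 Hn Hs Hrec Hsl HQ Hsum HD2 HD3.
 destruct (Rle_lt_dec (s 0%nat) (4 * INR m * 4^m)) as [|Hcon]; [assumption|exfalso].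
 set (lam := 4 * INR m).
 assert (Hm1 : 1 <= INR m) by (apply (le_INR 1); auto).
 assert (Hlam : 2 <= lam) by (unfold lam; lra).
 assert (HQn : forall k, 0 <= Q k) by (intros; apply Rlt_le; auto).
 assert (Key : forall k, (S k < n)%nat -> (k < m)%nat -> lam * Q k <= Q (S k)).
 { intros k Hk Hkm. rewrite Hrec by auto.
   assert (H1 := s_lower n s Hs Hsl k ltac:(lia)).
   assert (H2 : 4^k <= 4^m) by (apply Rle_pow; [lra|lia]).
   assert (H3 : 0 < 4^k) by (apply pow_lt; lra).
   assert (lam * 4^k <= s k * 4^k) by (unfold lam in *; nra).
   assert (lam <= s k) by (apply Rmult_le_reg_r with (4^k); auto).
   specialize (HQ k). nra. }
 destruct (Compare_dec.lt_dec m n) as [Hmn|Hmn].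
 - assert (H1 := invar Q lam m Hlam HQn (fun k Hk => Key k ltac:(lia) ltac:(lia)) m (le_n m)).
   assert (H2 : sum0 (S m) Q <= 1) by (rewrite <- Hsum; apply sum0_mono; auto).
   simpl in H2.
   assert (H3 : 2 * Q m / lam <= Q m) by (apply Rmult_le_reg_r with lam; [lra|]; field_simplify; [specialize (HQ m); nra | lra]).
   assert (H4 := tail m n Q ltac:(lia) HQn). rewrite Hsum in H4. nra.
 - assert (H1 := invar Q lam (n-1) Hlam HQn (fun k Hk => Key k ltac:(lia) ltac:(lia)) (n-1) (le_n _)).
   assert (H2 : sum0 n Q = sum0 (n-1) Q + Q (n-1)%nat) by (replace n with (S (n-1)) at 1 by lia; reflexivity).
   assert (H4 := tail (n-1) n Q ltac:(lia) HQn).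
   rewrite minus_INR in H4 by lia. simpl INR in H4.
   assert (Hnm : INR n <= INR m) by (apply le_INR; lia).
   assert (Qle : Q (n-1)%nat <= 1) by (assert (0 <= sum0 (n-1) Q) by (apply sum0_nonneg; auto); lra).
   assert (H5 : sum0 (n-1) Q <= 2 / lam).
   { apply Rle_trans with (2 * Q (n-1)%nat / lam); auto. unfold Rdiv. apply Rmult_le_compat_r; [apply Rlt_le, Rinv_0_lt_compat; lra| lra]. }
   assert (H6 : sum0 (n-1) Q * lam <= 2) by (apply Rle_trans with (2 / lam * lam); [apply Rmult_le_compat_r; lra | right; field; lra]).
   unfold lam in H6. rewrite Hsum in H4.
   assert (INR n - 1 >= 0) by (assert (1 <= INR n) by (apply (le_INR 1); lia); lra).
   nra. Qed.

Lemma half_pow k : (/2)^k * 2^k = 1.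
Proof. rewrite <- Rpow_mult_distr. replace (/2*2) with 1 by field. apply pow1. Qed.

Lemma s_upper2 n s : (forall k, 0 < s k) -> (forall k, (S k < n)%nat -> s (S k) <= s k / 2) ->
  forall k, (k < n)%nat -> s k * 2^k <= s 0%nat.
Proof. intros Hs Hsu. induction k; intros Hk; simpl; [lra|].
 specialize (IHk ltac:(lia)). specialize (Hsu k Hk). assert (0 < 2^k) by (apply pow_lt; lra). nra. Qed.

Lemma partQ0 n Q s U J : 1 <= U -> 2 * U <= 2^J ->
  (forall k, 0 < s k) -> (forall k, (S k < n)%nat -> Q (S k) = Q k * s k) ->
  (forall k, (S k < n)%nat -> s (S k) <= s k / 2) -> (forall k, 0 < Q k) ->
  sum0 n Q = 1 -> s 0%nat <= U ->
  / (2 * (2 * U)^J) <= Q 0%nat.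
Proof. intros HU HJ Hs Hrec Hsu HQ Hsum Hs0.
 assert (Inv : forall k, (k < n)%nat -> Q k * 2^k <= Q 0%nat * (2*U)^(Nat.min k J)).
 { induction k; intros Hk.
   - simpl. lra.
   - specialize (IHk ltac:(lia)). rewrite Hrec by lia.
     assert (Hsk := s_upper2 n s Hs Hsu k ltac:(lia)).
     assert (Hsk' := s_le0 n s Hs Hsu k ltac:(lia)).
     assert (Hp : 0 < 2^k) by (apply pow_lt; lra).
     assert (Hq := HQ k). assert (Hq0 := HQ 0%nat). assert (Hsk0 := Hs k).
     assert (HP : 0 < (2*U)^(Nat.min k J)) by (apply pow_lt; lra).
     destruct (Compare_dec.lt_dec k J) as [HkJ|HkJ].
     + replace (Nat.min (S k) J) with (S (Nat.min k J)) by lia.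
       simpl pow.
       assert (Q k * 2 ^ k * (2 * s k) <= Q 0%nat * (2 * U) ^ Nat.min k J * (2 * U)) by
         (apply Rmult_le_compat; nra).
       nra.
     + replace (Nat.min (S k) J) with (Nat.min k J) by lia.
       assert (H2J : 2^J <= 2^k) by (apply Rle_pow; [lra|lia]).
       assert (s k <= /2).
       { assert (s k * (2 * U) <= U) by nra.
         apply Rmult_le_reg_r with (2*U); [lra|]. field_simplify; lra. }
       simpl pow. nra. }
 assert (HQ0 : 0 < Q 0%nat) by auto.
 assert (HUJ : 0 < (2*U)^J) by (apply pow_lt; lra).
 assert (Hb : 1 <= Q 0%nat * (2 * U)^J * 2).
 { rewrite <- Hsum.
   apply Rle_trans with (sum0 n (fun k => Q 0%nat * (2*U)^J * (/2)^k)).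
   - apply sum0_le. intros k Hk. specialize (Inv k Hk).
     assert ((2*U)^(Nat.min k J) <= (2*U)^J) by (apply Rle_pow; [lra|lia]).
     assert (Q k * 2^k <= Q 0%nat * (2*U)^J) by nra.
     assert (Hh := half_pow k). assert (0 < (/2)^k) by (apply pow_lt; lra).
     replace (Q k) with (Q k * 2^k * (/2)^k) by (rewrite Rmult_assoc, (Rmult_comm (2^k)), Hh; ring).
     apply Rmult_le_compat_r; lra.
   - rewrite sum0_scal. pose proof (geom n). assert (0 < (/2)^n) by (apply pow_lt; lra). apply Rmult_le_compat_l; [apply Rlt_le, Rmult_lt_0_compat; lra| change (sum0 n (fun k => (/2)^k) <= 2); lra]. }
 apply Rmult_le_reg_r with (2 * (2*U)^J); [lra|]. rewrite Rinv_l by lra. lra. Qed.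

Lemma INR_le_pow2 J : INR J <= 2^J.
Proof. induction J; [simpl; lra|]. rewrite S_INR. simpl pow. assert (1 <= 2^J) by (apply pow_R1_Rle; lra). lra. Qed.

Lemma core c1 c2 : 0 < c1 -> c1 <= c2 -> exists L U L',
  0 < L /\ L <= /2 /\ 1 <= U /\ 0 < L' /\
  forall n Q s, (1 <= n)%nat -> (forall k, 0 < s k) -> (forall k, 0 < Q k) ->
   sum0 n Q = 1 -> c1 <= sum0 n (fun k => INR k * Q k) ->
   sum0 n (fun k => INR k * Q k) <= c2 ->
   sum0 n (fun k => INR k * Q k) <= INR n - 2 ->
   (forall k, (S k < n)%nat -> Q (S k) = Q k * s k) ->
   (forall k, (S k < n)%nat -> s k / 4 <= s (S k)) ->
   (forall k, (S k < n)%nat -> s (S k) <= s k / 2) ->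
   (L <= s 0%nat <= U) /\ (L' <= Q 0%nat <= 1).
Proof. intros Hc1 Hc12.
 destruct (INR_archimed 1 (2*c2) ltac:(lra)) as [m Hm]. rewrite Rmult_1_r in Hm.
 assert (Hm1 : (1 <= m)%nat) by (destruct m; [simpl in Hm; lra| lia]).
 set (U := 4 * INR m * 4^m).
 assert (HU : 1 <= U) by (unfold U; assert (1 <= INR m) by (apply (le_INR 1); auto);
   assert (1 <= 4^m) by (apply pow_R1_Rle; lra); nra).
 destruct (INR_archimed 1 (2*U) ltac:(lra)) as [J HJ]. rewrite Rmult_1_r in HJ.
 assert (HJ2 : 2 * U <= 2^J) by (pose proof (INR_le_pow2 J); lra).
 exists (Rmin (/2) (c1/4)), U, (/ (2 * (2 * U)^J)).
 split; [apply Rmin_pos; lra|]. split; [apply Rmin_l|]. split; [auto|].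
 split; [apply Rinv_0_lt_compat; assert (0 < (2*U)^J) by (apply pow_lt; lra); lra|].
 intros n Q s Hn Hs HQ Hsum HD1 HD2 HD3 Hrec Hsl Hsu.
 assert (HsU : s 0%nat <= U) by (apply (partU n Q s c2 m); auto; lra).
 split; [split|split].
 - destruct (Rle_lt_dec (s 0%nat) (/2)) as [h|h].
   + assert (H := partL n Q s Hs Hrec Hsu HQ Hsum h).
     apply Rle_trans with (c1/4); [apply Rmin_r| lra].
   + apply Rle_trans with (/2); [apply Rmin_l| lra].
 - exact HsU.
 - apply (partQ0 n Q s U J); auto.
 - rewrite <- Hsum. apply sum0_term; [lia|]. intros; apply Rlt_le; auto. Qed.

Lemma ln_le_sub z : 0 < z -> ln z <= z - 1.
Proof. intros Hz. pose proof (exp_ineq1_le (ln z)). rewrite exp_ln in H by auto. lra. Qed.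

Lemma ln_diff1 u v : 1 <= v -> v <= u -> 0 <= ln u - ln v <= u - v.
Proof. intros Hv Hu. split.
 - destruct (Req_dec u v); [subst; lra|]. assert (ln v < ln u) by (apply ln_increasing; lra). lra.
 - assert (ln (u / v) <= u/v - 1) by (apply ln_le_sub; apply Rdiv_lt_0_compat; lra).
   unfold Rdiv in H. rewrite ln_mult, ln_Rinv in H by (try apply Rinv_0_lt_compat; lra).
   assert (u * / v - 1 <= u - v).
   { apply Rmult_le_reg_r with v; [lra|]. field_simplify; [|lra]. nra. }
   lra. Qed.

Lemma ln_diff u v : 1 <= u -> 1 <= v -> Rabs (ln u - ln v) <= Rabs (u - v).
Proof. intros Hu Hv. destruct (Rle_dec v u).
 - pose proof (ln_diff1 u v Hv r). rewrite !Rabs_right by lra. lra.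
 - pose proof (ln_diff1 v u Hu ltac:(lra)). rewrite !Rabs_left1 by lra. lra. Qed.

Lemma ln2_lt_1 : ln 2 < 1.
Proof. rewrite <- ln_exp with 1. apply ln_increasing; [lra|]. pose proof (exp_ineq1 1 ltac:(lra)). lra. Qed.

Lemma d_pos i : 0 < d i.
Proof. unfold d. apply lt_0_INR. pose proof (lt_O_fact i). pose proof (Nat.pow_nonzero 2 (i * (i - 1) / 2) ltac:(lia)). nia. Qed.

Lemma d_S i : d (S i) = d i * 2^i * (INR i + 1).
Proof. unfold d.
 replace (S i * (S i - 1))%nat with (i * (i - 1) + i * 2)%nat by (destruct i; simpl; nia).
 rewrite Nat.div_add by lia. rewrite Nat.pow_add_r.
 change (fact (S i)) with (S i * fact i)%nat.
 rewrite !mult_INR, !pow_INR. replace (INR 2) with 2 by (simpl; lra). rewrite S_INR. ring. Qed.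

Lemma ln_d_S i : ln (d (S i)) = ln (d i) + INR i * ln 2 + ln (INR i + 1).
Proof. rewrite d_S. assert (0 < INR i + 1) by (pose proof (pos_INR i); lra).
 assert (0 < 2^i) by (apply pow_lt; lra). pose proof (d_pos i).
 rewrite !ln_mult by (try apply Rmult_lt_0_compat; lra). rewrite ln_pow by lra. ring. Qed.

Lemma chain (g : nat -> R) B lo m : (forall l, (l < m)%nat -> Rabs (g (S (lo + l)) - g (lo + l)%nat) <= B) ->
  Rabs (g (lo + m)%nat - g lo) <= INR m * B.
Proof. induction m; intros H.
 - rewrite Nat.add_0_r. simpl. unfold Rminus. rewrite Rplus_opp_r, Rabs_R0. lra.
 - rewrite S_INR. replace (lo + S m)%nat with (S (lo + m)) by lia.
   specialize (IHm (fun l Hl => H l ltac:(lia))). specialize (H m ltac:(lia)).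
   pose proof (Rabs_triang (g (S (lo + m)) - g (lo + m)%nat) (g (lo + m)%nat - g lo)).
   replace (g (S (lo + m)) - g (lo + m)%nat + (g (lo + m)%nat - g lo)) with (g (S (lo + m)) - g lo) in H0 by ring.
   lra. Qed.

Theorem lemma37 :
  forall c1 c2 C : R, 0 < c1 -> c1 <= c2 -> 0 <= C ->
  exists K : R,
    forall (t : nat) (rho : R) (a : nat) (x y : R),
      (0 < t)%nat -> 1 < rho < INR t -> 2 <= rho ->
      c1 <= INR t - rho <= c2 ->
      (0 < a)%nat -> Rabs (INR a - INR t) <= C ->
      is_xy t rho x y ->
      Rabs (x + INR a * y - ln (d a)) <= K.
Proof.
 intros c1 c2 C Hc1 Hc12 HC.
 destruct (core c1 c2 Hc1 Hc12) as (L & U & L' & HL & HL2 & HU & HL' & Hcore).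
 set (B := - ln L + ln U + 2 * (C + 1)).
 exists (- ln L' + C * B).
 intros t rho a x y Ht Hrho Hrho2 Htr Ha HaC [E1 E2].
 set (g := fun i : nat => x + INR i * y - ln (d i)).
 change (Rabs (g a) <= - ln L' + C * B).
 set (Q := fun k : nat => exp (x + INR (t - k) * y) / d (t - k)).
 set (sf := fun k : nat => 2^(t-1-k) * INR (t-k) / exp y).
 set (s := fun k : nat => if Nat.ltb k t then sf k else 1).
 assert (Hey : 0 < exp y) by apply exp_pos.
 assert (Hs : forall k, 0 < s k).
 { intros k. unfold s. destruct (Nat.ltb_spec k t); [|lra]. unfold sf.
   assert (0 < 2^(t-1-k)) by (apply pow_lt; lra). assert (0 < INR (t-k)) by (apply lt_0_INR; lia).
   apply Rdiv_lt_0_compat; [nra|lra]. }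
 assert (HQ : forall k, 0 < Q k) by (intros k; unfold Q; apply Rdiv_lt_0_compat; [apply exp_pos|apply d_pos]).
 assert (Hsum : sum0 t Q = 1) by (rewrite <- E1; symmetry; apply sum1_rev).
 assert (HD : sum0 t (fun k => INR k * Q k) = INR t - rho).
 { rewrite sum1_rev in E2. rewrite <- E2. replace (INR t) with (INR t * sum0 t Q) by (rewrite Hsum; ring). rewrite <- sum0_scal, <- sum0_minus.
   apply sum0_ext. intros k Hk. unfold Q. rewrite minus_INR by lia.
   replace (t - (t - k))%nat with k by lia. unfold Rdiv. ring. }
 assert (Hrec : forall k, (S k < t)%nat -> Q (S k) = Q k * s k).
 { intros k Hk. unfold s. destruct (Nat.ltb_spec k t); [|lia]. unfold Q, sf.
   replace (t - k)%nat with (S (t - S k)) by lia. replace (t - 1 - k)%nat with (t - S k)%nat by lia.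
   set (j := (t - S k)%nat). rewrite d_S, S_INR, Rmult_plus_distr_r, Rmult_1_l.
   replace (x + (INR j * y + y)) with ((x + INR j * y) + y) by ring. rewrite (exp_plus (x + INR j * y) y).
   pose proof (d_pos j). assert (0 < 2^j) by (apply pow_lt; lra).
   assert (0 < INR j + 1) by (pose proof (pos_INR j); lra).
   field. repeat split; lra. }
 assert (Hratio : forall k, (S k < t)%nat -> s (S k) = s k * ((INR (t - S k)) / (2 * INR (t - k)))).
 { intros k Hk. unfold s. destruct (Nat.ltb_spec k t); [|lia]. destruct (Nat.ltb_spec (S k) t); [|lia].
   unfold sf. replace (t - 1 - k)%nat with (S (t - 1 - S k)) by lia. simpl pow.
   assert (0 < INR (t - k)) by (apply lt_0_INR; lia). field. lra. }
 assert (Hsl : forall k, (S k < t)%nat -> s k / 4 <= s (S k)).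
 { intros k Hk. rewrite Hratio by auto. specialize (Hs k).
   replace (t - k)%nat with (S (t - S k)) by lia. rewrite S_INR.
   assert (1 <= INR (t - S k)) by (apply (le_INR 1); lia).
   assert (1/4 <= INR (t - S k) / (2 * (INR (t - S k) + 1))).
   { apply Rmult_le_reg_r with (2 * (INR (t - S k) + 1)); [lra|]. field_simplify; lra. }
   unfold Rdiv in *. nra. }
 assert (Hsu : forall k, (S k < t)%nat -> s (S k) <= s k / 2).
 { intros k Hk. rewrite Hratio by auto. specialize (Hs k).
   replace (t - k)%nat with (S (t - S k)) by lia. rewrite S_INR.
   assert (1 <= INR (t - S k)) by (apply (le_INR 1); lia).
   assert (INR (t - S k) / (2 * (INR (t - S k) + 1)) <= 1/2).
   { apply Rmult_le_reg_r with (2 * (INR (t - S k) + 1)); [lra|]. field_simplify; lra. }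
   unfold Rdiv in *. nra. }
 destruct (Hcore t Q s ltac:(lia) Hs HQ Hsum ltac:(lra) ltac:(lra) ltac:(lra) Hrec Hsl Hsu)
   as [[Hs0L Hs0U] [HQ0L HQ0U]].
 assert (Hgt : Rabs (g t) <= - ln L').
 { assert (E : g t = ln (Q 0%nat)).
   { unfold g, Q. rewrite Nat.sub_0_r. unfold Rdiv. rewrite ln_mult, ln_Rinv, ln_exp;
     [ring | apply d_pos | apply exp_pos | apply Rinv_0_lt_compat, d_pos]. }
   rewrite E. assert (ln L' <= ln (Q 0%nat)) by (destruct (Req_dec L' (Q 0%nat)) as [e|n];
     [rewrite e; lra | left; apply ln_increasing; lra]).
   assert (ln (Q 0%nat) <= 0) by (destruct (Req_dec (Q 0%nat) 1) as [e|n];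
     [rewrite e, ln_1; lra | rewrite <- ln_1; left; apply ln_increasing; [apply HQ|lra]]).
   rewrite Rabs_left1 by lra. lra. }
 assert (Hab : forall u v, 0 <= v -> -v <= u <= v -> Rabs u <= v) by (intros u v _ [h1 h2]; unfold Rabs; destruct Rcase_abs; lra).
 assert (Hab2 : forall u v, Rabs u <= v -> -v <= u <= v) by (intros u v h; unfold Rabs in h; destruct Rcase_abs in h; lra).
 assert (Hln : forall u v, 0 < u -> u <= v -> ln u <= ln v) by
   (intros u v h1 h2; destruct (Req_dec u v) as [e|n]; [rewrite e; lra| left; apply ln_increasing; lra]).
 assert (HlnL : ln L <= 0) by (rewrite <- ln_1; apply Hln; lra).
 assert (HlnU : 0 <= ln U) by (rewrite <- ln_1; apply Hln; lra).
 assert (HB : 0 <= B) by (unfold B; lra).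
 assert (Ht1 : 1 <= INR t) by (apply (le_INR 1); lia).
 set (Y := y - (INR t - 1) * ln 2 - ln (INR t)).
 assert (HY : Rabs Y <= - ln L + ln U).
 { assert (Es : ln (s 0%nat) = - Y).
   { unfold s. destruct (Nat.ltb_spec 0 t); [|lia]. unfold sf. replace (t - 1 - 0)%nat with (t - 1)%nat by lia. replace (t - 0)%nat with t by lia.
     assert (0 < 2^(t-1)) by (apply pow_lt; lra). assert (0 < INR t) by lra.
     unfold Rdiv.
     assert (0 < / exp y) by (apply Rinv_0_lt_compat, exp_pos).
     rewrite ln_mult by (try apply Rmult_lt_0_compat; lra). rewrite ln_mult by lra.
     rewrite ln_Rinv by lra. rewrite ln_exp, ln_pow by lra.
     unfold Y. rewrite minus_INR by lia. simpl INR. ring. }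
   assert (ln L <= ln (s 0%nat)) by (apply Hln; lra).
   assert (ln (s 0%nat) <= ln U) by (apply Hln; [apply Hs| lra]).
   apply Hab; lra. }
 assert (Hstep : forall j, Rabs (INR j + 1 - INR t) <= C + 1 -> Rabs (g (S j) - g j) <= B).
 { intros j Hj. assert (E : g (S j) - g j = Y + (INR t - 1 - INR j) * ln 2 + (ln (INR t) - ln (INR j + 1))).
   { unfold g, Y. rewrite ln_d_S, S_INR. ring. }
   rewrite E. assert (Hj1 : 1 <= INR j + 1) by (pose proof (pos_INR j); lra).
   pose proof (ln_diff (INR t) (INR j + 1) Ht1 Hj1) as Hd.
   apply Hab2 in Hd. apply Hab2 in HY.
   assert (Hd2 : Rabs (INR t - (INR j + 1)) <= C + 1) by (rewrite Rabs_minus_sym; auto).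
   pose proof (Hab2 _ _ Hj) as Hj2.
   pose proof ln_lt_2. pose proof ln2_lt_1.
   assert (-(C+1) <= (INR t - 1 - INR j) * ln 2 <= C + 1) by (destruct Hj2; split; nra).
   apply Hab; unfold B; lra. }
 assert (Hdiff : Rabs (g a - g t) <= C * B).
 { destruct (Compare_dec.le_lt_dec t a) as [h|h].
   - assert (Eat : INR (a - t) = INR a - INR t) by (apply minus_INR; auto).
     pose proof (chain g B t (a - t)) as Hc. replace (t + (a - t))%nat with a in Hc by lia.
     apply Rle_trans with (INR (a - t) * B).
     + apply Hc. intros l Hl. apply Hstep. rewrite plus_INR.
       assert (INR l + 1 <= INR (a - t)) by (rewrite <- S_INR; apply le_INR; lia).
       pose proof (pos_INR l). apply Hab2 in HaC. apply Hab; lra.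
     + apply Rmult_le_compat_r; auto. apply Hab2 in HaC. lra.
   - assert (Eat : INR (t - a) = INR t - INR a) by (apply minus_INR; lia).
     pose proof (chain g B a (t - a)) as Hc. replace (a + (t - a))%nat with t in Hc by lia.
     rewrite Rabs_minus_sym.
     apply Rle_trans with (INR (t - a) * B).
     + apply Hc. intros l Hl. apply Hstep. rewrite plus_INR.
       assert (INR l + 1 <= INR (t - a)) by (rewrite <- S_INR; apply le_INR; lia).
       pose proof (pos_INR l). apply Hab2 in HaC. apply Hab; lra.
     + apply Rmult_le_compat_r; auto. apply Hab2 in HaC. lra. }
 pose proof (Rabs_triang (g a - g t) (g t)) as Ht3.
 replace (g a - g t + g t) with (g a) in Ht3 by ring. lra.
Qed.
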